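(* There exists a function $\rho$ from the set of all (finite) instruction sequences to the set of closed terms of BTA extended with explicit substitution such that for every instruction sequence $P$: $\mathrm{elim}(\rho(P))$ is identical to $|P|$, and $\mathrm{size}(\rho(P))\le 4\cdot\mathrm{len}(P)+1$.
   Context: Fix a set of basic instructions (actions). A primitive instruction is one of: $a$, $+a$, $-a$ (for a basic instruction $a$), $\#l$ ($l\in\mathbb N$), or $!$. An instruction sequence is a finite nonempty sequence $P=u_1;\dots;u_k$ of primitive instructions; $\mathrm{len}(P)=k$. Terms of BTA with explicit substitution: fix a countably infinite set of variables; terms are variables $x$, the constants $S$ (termination) and $D$ (deadlock), postconditional compositions $p\trianglelefteq a\trianglerighteq q$ for terms $p,q$ and basic instruction $a$, and substitutions $[p/x]q$ for terms $p,q$ and variable $x$. Write $a\circ p$ for $p\trianglelefteq a\trianglerighteq p$. A term is closed if it has no variable occurrences outside the bound position of substitution... more precisely, closed means $\mathrm{elim}$ of it contains no variables. Size: $\mathrm{size}(x)=\mathrm{size}(S)=\mathrm{size}(D)=1$, $\mathrm{size}(p\trianglelefteq a\trianglerighteq q)=\mathrm{size}(p)+\mathrm{size}(q)+1$, $\mathrm{size}([p/x]q)=\mathrm{size}(p)+\mathrm{size}(q)+1$. Substitution elimination $\mathrm{elim}$: $\mathrm{elim}(x)=x$, $\mathrm{elim}(S)=S$, $\mathrm{elim}(D)=D$, $\mathrm{elim}(p\trianglelefteq a\trianglerighteq q)=\mathrm{elim}(p)\trianglelefteq a\trianglerighteq\mathrm{elim}(q)$, and $\mathrm{elim}([p/x]q)$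 is obtained from $\mathrm{elim}(q)$ by replacing every occurrence of $x$ by $\mathrm{elim}(p)$ (this corresponds to the axioms $[p/x]x=p$, $[p/x]y=y$ for $y\ne x$, $[p/x]S=S$, $[p/x]D=D$, $[p/x](q\trianglelefteq a\trianglerighteq r)=([p/x]q)\trianglelefteq a\trianglerighteq([p/x]r)$). Thread extraction $|\cdot|$ maps instruction sequences to substitution-free closed terms by: $|a|=a\circ D$; $|a;Y|=a\circ|Y|$; $|+a|=a\circ D$; $|+a;Y|=|Y|\trianglelefteq a\trianglerighteq|\#2;Y|$; $|-a|=a\circ D$; $|-a;Y|=|\#2;Y|\trianglelefteq a\trianglerighteq|Y|$; $|\#l|=D$; $|\#0;Y|=D$; $|\#1;Y|=|Y|$; $|\#(l+2);u|=D$ for a primitive instruction $u$; $|\#(l+2);u;Y|=|\#(l+1);Y|$; $|!|=S$; $|!;Y|=S$. *)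

(* Defs.v *)
From Stdlib Require Import List Arith.
Import ListNotations.
Set Implicit Arguments.

Section Defs.
Variable A : Type. (* the set of basic instructions *)

Inductive prim : Type :=
| PBasic : A -> prim
| PPos   : A -> prim
| PNeg   : A -> prim
| PJump  : nat -> prim
| PHalt  : prim.

(* instruction sequences: finite nonempty lists (nonemptiness is imposed
   as a hypothesis where needed) *)
Definition iseq := list prim.
Definition len (P : iseq) : nat := length P.

Inductive term : Type :=
| TVar : nat -> term
| TS : term                             (* termination S *)
| TD : term                             (* deadlock D *)
| TPC : term -> A -> term -> term       (* p <| a |> q *)
| TSub : term -> nat -> term -> term.   (* [p/x]q *)

Definition tseq (a : A) (p : term) : term := TPC p a p.

Fixpoint tsize (t : term) : nat :=
  match t with
  | TVar _ | TS | TD => 1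
  | TPC p _ q => tsize p + tsize q + 1
  | TSub p _ q => tsize p + tsize q + 1
  end.

Fixpoint replace (x : nat) (s t : term) : term :=
  match t with
  | TVar y => if Nat.eqb y x then s else TVar y
  | TS => TS
  | TD => TD
  | TPC p a q => TPC (replace x s p) a (replace x s q)
  | TSub p y q => TSub (replace x s p) y (replace x s q)
  end.

Fixpoint elim (t : term) : term :=
  match t with
  | TVar x => TVar x
  | TS => TS
  | TD => TD
  | TPC p a q => TPC (elim p) a (elim q)
  | TSub p x q => replace x (elim p) (elim q)
  end.

Fixpoint has_var (t : term) : bool :=
  match t with
  | TVar _ => true
  | TS | TD => false
  | TPC p _ q | TSub p _ q => has_var p || has_var q
  end.

Definition closed (t : term) : Prop := has_var (elim t) = false.

(* thread extraction |P|; the inner fixpoint [jmp l Y] computes |#l;Y| *)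
Fixpoint extr (P : iseq) : term :=
  let fix jmp (l : nat) (Y : iseq) : term :=
    match l with
    | 0 => TD
    | 1 => match Y with
           | [] => TD
           | _ => extr Y
           end
    | S (S k) => match Y with
           | [] => TD
           | [_] => TD
           | _ :: Y' => jmp (S k) Y'
           end
    end in
  match P with
  | [] => TD   (* not an instruction sequence; irrelevant *)
  | [u] => match u with
           | PBasic a | PPos a | PNeg a => tseq a TD
           | PJump _ => TD
           | PHalt => TS
           end
  | u :: Y => match u with
           | PBasic a => tseq a (extr Y)
           | PPos a => TPC (extr Y) a (jmp 2 Y)
           | PNeg a => TPC (jmp 2 Y) a (extr Y)
           | PJump l => jmp l Y
           | PHalt => TS
           end
  end.

End Defs.

(* Main.v *)
Require Import Defs.
From Stdlib Require Import List Arith Lia Bool.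
Import ListNotations.

Section S.
Variable A : Type.

Definition J (l : nat) (Y : iseq A) : term A :=
  match l with 0 => TD A | S m => extr (skipn m Y) end.

Definition JF :=
  (fix jmp (l : nat) (Y : iseq A) : term A :=
    match l with
    | 0 => TD A
    | 1 => match Y with
           | [] => TD A
           | _ => extr Y
           end
    | S (S k) => match Y with
           | [] => TD A
           | [_] => TD A
           | _ :: Y' => jmp (S k) Y'
           end
    end).
Lemma jmp_eq : forall l Y, JF l Y = J l Y.
Proof. unfold JF.
  intros l Y. revert l. induction Y as [|u Y IH]; intros l.
  - destruct l as [|[|k]]; simpl; reflexivity.
  - destruct l as [|[|k]]; simpl; try reflexivity.
    destruct Y as [|v Y'].
    + simpl. destruct k; reflexivity.
    + specialize (IH (S k)). simpl in IH |- *. rewrite IH. reflexivity.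
Qed.

Lemma extr_cons : forall u Y, extr (u :: Y) =
  match u with
  | PBasic a => tseq a (extr Y)
  | PPos a => TPC (extr Y) a (extr (skipn 1 Y))
  | PNeg a => TPC (extr (skipn 1 Y)) a (extr Y)
  | PJump _ l => J l Y
  | PHalt _ => TS A
  end.
Proof.
  intros u Y. destruct Y as [|v Y].
  - destruct u; simpl; try reflexivity. destruct n as [|m]; simpl; try reflexivity.
    destruct m; reflexivity.
  - transitivity (match u with
      | PBasic a => tseq a (extr (v :: Y))
      | PPos a => TPC (extr (v::Y)) a (JF 2 (v::Y))
      | PNeg a => TPC (JF 2 (v::Y)) a (extr (v::Y))
      | PJump _ l => JF l (v::Y)
      | PHalt _ => TS A
      end).
    + reflexivity.
    + destruct u; rewrite ?jmp_eq; reflexivity.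
Qed.



Definition V (k j : nat) : term A := if j <? k then TVar A j else TD A.

Definition body (k n : nat) (u : prim A) : term A :=
  match u with
  | PBasic a => tseq a (V k (S n))
  | PPos a => TPC (V k (S n)) a (V k (S (S n)))
  | PNeg a => TPC (V k (S (S n))) a (V k (S n))
  | PJump _ 0 => TD A
  | PJump _ (S m) => V k (n + S m)
  | PHalt _ => TS A
  end.

Fixpoint inst (P : iseq A) (n : nat) (t : term A) : term A :=
  match t with
  | TVar _ j => if (n <=? j) && (j <? length P) then extr (skipn j P) else TVar A j
  | TS _ => TS A
  | TD _ => TD A
  | TPC p a q => TPC (inst P n p) a (inst P n q)
  | TSub p x q => TSub (inst P n p) x (inst P n q)
  end.

Fixpoint F (k n : nat) (Y : iseq A) (q : term A) : term A :=
  match Y with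
  | [] => q
  | u :: Y' => F k (S n) Y' (TSub (body k n u) n q)
  end.

Definition rho (P : iseq A) : term A :=
  match P with
  | [] => TD A
  | u :: Y => F (length P) 1 Y (body (length P) 0 u)
  end.

Lemma elim_body k n u : elim (body k n u) = body k n u.
Proof. destruct u as [a|a|a|[|m]|]; simpl; unfold V;
  repeat match goal with |- context [?x <? ?y] => destruct (x <? y) end; reflexivity. Qed.

Lemma size_body k n u : tsize (body k n u) <= 3.
Proof. destruct u as [a|a|a|[|m]|]; simpl; unfold V;
  repeat match goal with |- context [?x <? ?y] => destruct (x <? y) end; simpl; lia. Qed.

Lemma size_F k n Y q : tsize (F k n Y q) <= tsize q + 4 * length Y.
Proof.
  revert n q. induction Y as [|u Y IH]; intros n q; simpl. lia.
  specialize (IH (S n) (TSub (body k n u) n q)). simpl in IH.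
  pose proof (size_body k n u). lia.
Qed.

Lemma inst_id P n t : length P <= n -> inst P n t = t.
Proof.
  intros H. induction t; simpl; try congruence.
  destruct (n <=? n0) eqn:E1; destruct (n0 <? length P) eqn:E2; simpl; try reflexivity.
  apply Nat.leb_le in E1. apply Nat.ltb_lt in E2. lia.
Qed.

Lemma inst_replace P n b t : n < length P -> inst P (S n) b = extr (skipn n P) ->
  inst P (S n) (replace n b t) = inst P n t.
Proof.
  intros Hn Hb. induction t; cbn [replace inst]; try congruence.
  destruct (Nat.eqb_spec n0 n).
  - subst. rewrite Hb. rewrite Nat.leb_refl. apply Nat.ltb_lt in Hn. rewrite Hn. reflexivity.
  - cbn [inst]. destruct (Nat.leb_spec (S n) n0); destruct (Nat.leb_spec n n0); cbn [andb]; try reflexivity; lia.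
Qed.

Lemma inst_V P n j : S n <= j -> inst P (S n) (V (length P) j) = extr (skipn j P).
Proof.
  intros H. unfold V. destruct (Nat.ltb_spec j (length P)); cbn [inst].
  - destruct (Nat.leb_spec (S n) j); [|lia]. apply Nat.ltb_lt in H0. rewrite H0. reflexivity.
  - rewrite (skipn_all2 (A:=prim A)) by lia. reflexivity.
Qed.

Lemma skipn_S (P : iseq A) n u (Y : iseq A) m : skipn n P = u :: Y -> skipn (S n + m) P = skipn m Y.
Proof.
  intros H. replace (S n + m) with (m + 1 + n) by lia.
  rewrite <- !skipn_skipn, H. reflexivity.
Qed.

Lemma body_ok P n u Y : skipn n P = u :: Y ->
  inst P (S n) (body (length P) n u) = extr (u :: Y).
Proof.
  intros H. rewrite extr_cons.
  assert (H1 : extr (skipn (S n) P) = extr Y).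
  { pose proof (skipn_S P n u Y 0 H) as E. rewrite Nat.add_0_r in E. rewrite E. reflexivity. }
  assert (H2 : extr (skipn (S (S n)) P) = extr (skipn 1 Y)).
  { pose proof (skipn_S P n u Y 1 H) as E. replace (S n + 1) with (S (S n)) in E by lia.
    rewrite E. reflexivity. }
  destruct u as [a|a|a|[|m]|]; simpl.
  - unfold tseq. rewrite inst_V by lia. rewrite H1. reflexivity.
  - rewrite !inst_V by lia. rewrite H1, H2. reflexivity.
  - rewrite !inst_V by lia. rewrite H1, H2. reflexivity.
  - reflexivity.
  - rewrite inst_V by lia. pose proof (skipn_S P n _ Y m H) as E.
    replace (n + S m) with (S n + m) by lia. rewrite E. reflexivity.
  - reflexivity.
Qed.

Lemma F_ok P n Y q : skipn n P = Y -> elim (F (length P) n Y q) = inst P n (elim q).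
Proof.
  revert n q. induction Y as [|u Y IH]; intros n q H; simpl.
  - rewrite inst_id; [reflexivity|]. destruct (Nat.le_gt_cases (length P) n); [assumption|].
    exfalso. assert (length (skipn n P) = length P - n) by apply length_skipn.
    rewrite H in H1. simpl in H1. lia.
  - assert (Hn : n < length P).
    { assert (length (skipn n P) = length P - n) by apply length_skipn.
      rewrite H in H0. simpl in H0. lia. }
    rewrite IH.
    + simpl. rewrite elim_body. apply inst_replace; [assumption|].
      rewrite body_ok with (Y := Y) by assumption. rewrite H. reflexivity.
    + pose proof (skipn_S P n u Y 0 H) as E. rewrite Nat.add_0_r in E. exact E.
Qed.

Lemma extr_novar : forall N (P : iseq A), length P <= N -> has_var (extr P) = false.
Proof.
  induction N as [|N IH]; intros P HP.
  - destruct P; [reflexivity| simpl in HP; lia].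
  - destruct P as [|u Y]; [reflexivity|]. simpl in HP.
    assert (HY : forall m, has_var (extr (skipn m Y)) = false).
    { intros m. apply IH. rewrite length_skipn. lia. }
    pose proof (HY 0) as H0. simpl in H0.
    rewrite extr_cons. destruct u as [a|a|a|[|m]|]; cbn [has_var J tseq]; rewrite ?H0, ?HY; reflexivity.
Qed.

End S.

Theorem theoremA (A : Type) :
  exists rho : iseq A -> term A,
    forall P : iseq A, P <> nil ->
      closed (rho P) /\ elim (rho P) = extr P /\
      tsize (rho P) <= 4 * len P + 1.
Proof.
  exists (@rho A). intros P HP.
  assert (He : elim (@rho A P) = extr P).
  { destruct P as [|u Y]; [congruence|]. unfold rho.
    rewrite F_ok by reflexivity. rewrite elim_body.
    apply body_ok. reflexivity. }
  split; [|split].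
  - unfold closed. rewrite He. apply (@extr_novar A (length P)). lia.
  - exact He.
  - destruct P as [|u Y]; [congruence|]. unfold rho, len.
    pose proof (@size_F A (length (u::Y)) 1 Y (@body A (length (u::Y)) 0 u)).
    pose proof (@size_body A (length (u::Y)) 0 u). simpl in *. lia.
Qed.
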